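(* Let $N\ge 0$ be an integer and let $a,b,c,z$ be complex numbers (or indeterminates) with $z\neq 0$, such that all denominators below are nonzero. Then \[ {}_{2}F_{1}^{[N]}\left(\begin{matrix}a,b\\ c\end{matrix};z\right) =\frac{(a)_{N} (c-a)_{N}}{(c)_{N}\, N!} \sum_{n=0}^{N}\frac{(1+n)_{N-n}}{(a+n)_{N-n}}\,\frac{(1+N-n)_{n}}{(c-a+N-n)_{n}}\, \frac{(b+Nz^{-1}-n)_{n}}{(Nz^{-1}-n)_{n}}. \]
   Context: For a number $x$ and an integer $m\ge 0$, $(x)_m=x(x+1)\cdots(x+m-1)$ denotes the rising factorial, with $(x)_0=1$. For an integer $N\ge 0$ the truncated hypergeometric function is defined by \[ {}_{2}F_{1}^{[N]}\left(\begin{matrix}a,b\\ c\end{matrix};z\right)=\sum_{m=0}^{N}\frac{(a)_m(b)_m}{(c)_m\, m!}\,\frac{(N+1-m)_m}{(Nz^{-1}-m)_m}. \] *)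

(* Defs.v *)
From HB Require Import structures.
From mathcomp Require Import all_boot all_order all_algebra.
Set Implicit Arguments. Unset Strict Implicit. Unset Printing Implicit Defensive.
Import Order.TTheory GRing.Theory Num.Theory.
Local Open Scope ring_scope.

Definition rfact {C : numClosedFieldType} (x : C) (m : nat) : C :=
  \prod_(i < m) (x + i%:R).

Definition F21trunc {C : numClosedFieldType} (N : nat) (a b c z : C) : C :=
  \sum_(m < N.+1)
    (rfact a m * rfact b m) / (rfact c m * (m`!)%:R)
    * (rfact ((N.+1 - m)%:R) m / rfact (N%:R / z - m%:R) m).

(* Main.v *)
Require Import Defs.
From HB Require Import structures.
From mathcomp Require Import all_boot all_order all_algebra.
From mathcomp Require Import ring.
Import Order.TTheory GRing.Theory Num.Theory.
Local Open Scope ring_scope.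

Section R.
Variable C : numClosedFieldType.
Implicit Types x y : C.

Lemma rfact0 x : rfact x 0 = 1.
Proof. by rewrite /rfact big_ord0. Qed.

Lemma rfactS x k : rfact x k.+1 = rfact x k * (x + k%:R).
Proof. by rewrite /rfact big_ord_recr. Qed.

Lemma rfactD x m n : rfact x (m + n) = rfact x m * rfact (x + m%:R) n.
Proof.
elim: n => [|n IH]; first by rewrite addn0 rfact0 mulr1.
by rewrite addnS !rfactS IH mulrA natrD addrA.
Qed.

Lemma rfact_nat n k : n`!%:R * rfact (n.+1%:R : C) k = (n + k)`!%:R.
Proof.
elim: k => [|k IH]; first by rewrite rfact0 mulr1 addn0.
by rewrite rfactS mulrA IH addnS factS natrM mulrC -natrD addSn.
Qed.

Lemma bin_prod N k j : (k + j <= N)%N ->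
  ('C(N, k + j) * 'C(k + j, k) = 'C(N, k) * 'C(N - k, j))%N.
Proof.
move=> h.
have hk : (k <= N)%N by apply: leq_trans h; apply: leq_addr.
have hj : (j <= N - k)%N by rewrite leq_subRL.
have p : (0 < k`! * j`! * (N - k - j)`!)%N by rewrite !muln_gt0 !fact_gt0.
apply/eqP; rewrite -(eqn_pmul2r p); apply/eqP.
have e1 := bin_fact (leq_addr j k). rewrite addKn in e1.
have e2 := bin_fact h. have e3 := bin_fact hj. have e4 := bin_fact hk.
rewrite -subnDA in e3 *.
transitivity ('C(N, k + j) * ('C(k + j, k) * (k`! * j`!)) * (N - (k + j))`!)%N.
  by rewrite !mulnA.
rewrite e1 -mulnA e2.
transitivity ('C(N, k) * (k`! * ('C(N - k, j) * (j`! * (N - (k + j))`!))))%N.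
  by rewrite e3 e4.
rewrite !mulnA; congr (_ * _)%N. rewrite -!mulnA; congr (_ * _)%N.
by rewrite mulnCA.
Qed.

Lemma vdm x y n : rfact (x + y) n =
  \sum_(k < n.+1) 'C(n, k)%:R * rfact x k * rfact y (n - k).
Proof.
elim: n => [|n IH].
  by rewrite big_ord_recl big_ord0 !rfact0 addr0 bin0 mulr1 mulr1.
rewrite rfactS IH mulr_suml.
have step : forall k : 'I_n.+1,
  'C(n, k)%:R * rfact x k * rfact y (n - k) * (x + y + n%:R) =
  'C(n, k)%:R * rfact x k.+1 * rfact y (n - k) +
  'C(n, k)%:R * rfact x k * rfact y (n - k).+1 :> C.
  move=> [k hk] /=; rewrite !rfactS.
  have e : (x + y + n%:R) = (x + k%:R) + (y + (n - k)%:R).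
    rewrite natrB; last by rewrite -ltnS.
    ring.
  rewrite e; ring.
rewrite (eq_bigr _ (fun k _ => step k)) big_split /=.
rewrite [in RHS]big_ord_recl /= bin0 rfact0 mulr1 subn0.
under [in RHS]eq_bigr => i _ do rewrite binS natrD !mulrDl subSS.
rewrite [in RHS]big_split /= [RHS]addrA [RHS]addrC; congr (_ + _).
rewrite big_ord_recl /= bin0 rfact0 subn0.
rewrite [in RHS]big_ord_recr /= bin_small // mul0r mul0r addr0.
congr (_ + _); first by rewrite mulr1.
apply: eq_bigr => [[j hj]] _ /=.
by rewrite /bump /= add1n subnSK.
Qed.


Lemma rfact_nzD x m n : rfact x (m + n) != 0 ->
  rfact x m != 0 /\ rfact (x + m%:R) n != 0.
Proof. by rewrite rfactD mulf_eq0 negb_or => /andP. Qed.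

Lemma fact_nz n : (n`!%:R : C) != 0.
Proof. by rewrite pnatr_eq0 -lt0n fact_gt0. Qed.

Lemma bin_nz N n : (n <= N)%N -> ('C(N, n)%:R : C) != 0.
Proof. by move=> h; rewrite pnatr_eq0 -lt0n bin_gt0. Qed.

Lemma rfact_binf N m : (m <= N)%N ->
  rfact ((N - m).+1%:R : C) m = 'C(N, m)%:R * m`!%:R.
Proof.
move=> h.
have e := rfact_nat (N - m) m. rewrite subnK // -(bin_fact h) in e.
apply: (mulfI (fact_nz (N - m))).
by rewrite e !natrM; ring.
Qed.

Lemma ratio_exp (b w : C) n : rfact (w - n%:R) n != 0 ->
  rfact (b + w - n%:R) n / rfact (w - n%:R) n =
  \sum_(k < n.+1) 'C(n, k)%:R * (rfact b k / rfact (w - k%:R) k).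
Proof.
move=> hnz.
rewrite -addrA (vdm b) mulr_suml; apply: eq_bigr => [[k hk]] _ /=.
have hkn : (k <= n)%N by rewrite -ltnS.
have e : rfact (w - n%:R) n = rfact (w - n%:R) (n - k) * rfact (w - k%:R) k.
  rewrite -{2}(subnK hkn) rfactD natrB //; congr (_ * rfact _ _); ring.
rewrite e in hnz *.
move: hnz; rewrite mulf_eq0 negb_or => /andP [h1 h2].
by field; rewrite h1 h2.
Qed.

Lemma inner (a c : C) N k : (k <= N)%N ->
  \sum_(n < N.+1) 'C(N, n)%:R * 'C(n, k)%:R * (rfact a n * rfact (c - a) (N - n))
  = 'C(N, k)%:R * rfact a k * rfact (c + k%:R) (N - k).
Proof.
move=> hk.
pose F := fun n : nat => 'C(N, n)%:R * 'C(n, k)%:R * (rfact a n * rfact (c - a) (N - n)) : C.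
transitivity (\sum_(0 <= n < N.+1) F n); first by rewrite big_mkord.
rewrite (big_cat_nat _ (n := k)) //=; last by apply: leqW.
rewrite big_nat_cond big1 ?add0r; last first.
  move=> i /andP[/andP[_ hi] _]; by rewrite /F (bin_small hi) !(mul0r, mulr0).
have := big_addn 0 N.+1 k xpredT F; rewrite add0n => ->.
rewrite big_mkord subSn // /F.
have -> : c + k%:R = (a + k%:R) + (c - a) by ring.
rewrite vdm mulr_sumr; apply: eq_bigr => [[j hj]] _ /=.
have hkj : (k + j <= N)%N by rewrite -leq_subRL // -ltnS.
rewrite addnC.
have e := bin_prod _ _ _ hkj.
rewrite rfactD subnDA.
have -> : ('C(N, k + j)%:R * 'C(k + j, k)%:R : C) = 'C(N, k)%:R * 'C(N - k, j)%:R.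
  by rewrite -!natrM e.
ring.
Qed.

Lemma widen_bin n N (G : nat -> C) : (n <= N)%N ->
  \sum_(k < n.+1) 'C(n, k)%:R * G k = \sum_(k < N.+1) 'C(n, k)%:R * G k.
Proof.
move=> h; rewrite (big_ord_widen N.+1 (fun k => 'C(n, k)%:R * G k)) // big_mkcond /=.
apply: eq_bigr => k _; case: ifP => // /negbT; rewrite -leqNgt => hk.
by rewrite bin_small // mul0r.
Qed.
End R.

Theorem theorem3p4 (C : numClosedFieldType) (N : nat) (a b c z : C)
  (hz : z != 0)
  (hc : forall m : nat, (m <= N)%N -> rfact c m != 0)
  (hzN : forall m : nat, (m <= N)%N -> rfact (N%:R / z - m%:R) m != 0)
  (ha : forall n : nat, (n <= N)%N -> rfact (a + n%:R) (N - n) != 0)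
  (hca : forall n : nat, (n <= N)%N -> rfact (c - a + (N - n)%:R) n != 0) :
  F21trunc N a b c z =
  (rfact a N * rfact (c - a) N) / (rfact c N * (N`!)%:R) *
  \sum_(n < N.+1)
    (rfact (1 + n%:R) (N - n) / rfact (a + n%:R) (N - n)) *
    (rfact (1 + (N - n)%:R) n / rfact (c - a + (N - n)%:R) n) *
    (rfact (b + N%:R / z - n%:R) n / rfact (N%:R / z - n%:R) n).
Proof.
set w := N%:R / z in hzN *.
have hcN := hc N (leqnn N).
rewrite [RHS]mulr_sumr.
rewrite (eq_bigr (fun n : 'I_N.+1 => \sum_(k < N.+1) 'C(N, n)%:R * 'C(n, k)%:R *
   (rfact a n * rfact (c - a) (N - n)) / rfact c N *
   (rfact b k / rfact (w - k%:R) k))); last first.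
  move=> [n hn] _ /=.
  have hn' : (n <= N)%N by rewrite -ltnS.
  rewrite !nat1r.
  have e1 : rfact (n.+1%:R : C) (N - n) = 'C(N, n)%:R * (N - n)`!%:R.
    by rewrite -{1}(subKn hn') rfact_binf ?leq_subr // bin_sub.
  rewrite e1 rfact_binf // ratio_exp ?hzN //.
  rewrite (widen_bin _ n N (fun k => rfact b k / rfact (w - k%:R) k) hn') !mulr_sumr.
  apply: eq_bigr => [[k hk]] _ /=.
  have hk' : (k <= N)%N by rewrite -ltnS.
  have eA : rfact a N = rfact a n * rfact (a + n%:R) (N - n) by rewrite -rfactD subnKC.
  have eCA : rfact (c - a) N = rfact (c - a) (N - n) * rfact (c - a + (N - n)%:R) n.
    by rewrite -rfactD subnK.
  have eF : (N`!%:R : C) = 'C(N, n)%:R * (n`!%:R * (N - n)`!%:R).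
    by rewrite -(bin_fact hn') !natrM.
  rewrite eA eCA eF.
  have h1 := ha n hn'. have h2 := hca n hn'. have h3 := hzN k hk'.
  have h4 := fact_nz C n. have h5 := fact_nz C (N - n). have h6 := bin_nz C _ _ hn'.
  field.
  by rewrite h1 h2 h3 h4 h5 h6 hcN.
rewrite exchange_big /= /F21trunc.
apply: eq_bigr => [[k hk]] _ /=.
have hk' : (k <= N)%N by rewrite -ltnS.
rewrite -!mulr_suml.
rewrite (inner _ _ _ _ _ hk') subSn // rfact_binf //.
have eC : rfact c N = rfact c k * rfact (c + k%:R) (N - k) by rewrite -rfactD subnKC.
rewrite eC.
have := hcN; rewrite eC mulf_eq0 negb_or => /andP [h1 h2].
have h3 := hzN k hk'. have h4 := fact_nz C k.
field.
by rewrite h1 h2 h3 h4.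
Qed.
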